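(* If $g(t)^{-1}\log G(t)\to0$ as $t\to\infty$, then for all $c>0$, $\int_0^\infty e^{-cg(t)}\,\mathrm{d}t<\infty$.
   Context: The function $g:[0,\infty)\to(0,\infty)$ is $C^1$ and non-decreasing, and $G(t)=\int_0^tg(s)\,\mathrm{d}s$. *)

(* Defs.v *)
From Stdlib Require Import Reals.
From Coquelicot Require Import Coquelicot.
Open Scope R_scope.

Definition Gprim (g : R -> R) (t : R) : R := RInt g 0 t.

(* Main.v *)
Require Import Defs.
From Stdlib Require Import Reals Lra.
From Coquelicot Require Import Coquelicot.
Open Scope R_scope.

Lemma loc_pos (x : R) : 0 < x -> locally x (fun y => 0 < y).
Proof.
  intros Hx. exists (mkposreal (x/2) ltac:(lra)). intros y Hy.
  unfold ball in Hy; simpl in Hy; unfold AbsRing_ball, abs, minus, plus, opp in Hy; simpl in Hy.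
  apply Rabs_lt_between' in Hy; simpl in Hy; lra.
Qed.

Lemma exp_le_exp' (x y : R) : x <= y -> exp x <= exp y.
Proof. intros [H|H]. apply Rlt_le, exp_increasing; auto. subst; lra. Qed.

Theorem mainTheorem18 (g : R -> R)
  (g_pos : forall t, 0 <= t -> 0 < g t)
  (g_C1 : forall t, 0 <= t -> ex_derive g t /\ continuous (Derive g) t)
  (g_mono : forall s t, 0 <= s -> s <= t -> g s <= g t)
  (hlim : is_lim (fun t => ln (Gprim g t) / g t) p_infty 0) :
  forall c : R, 0 < c ->
    ex_RInt_gen (fun t => exp (- (c * g t))) (at_point 0) (Rbar_locally p_infty).
Proof.
  intros c Hc.
  set (f := fun t => exp (- (c * g t))).
  assert (fcont : forall x, 0 <= x -> continuous f x).
  { intros x Hx. apply (@ex_derive_continuous R_AbsRing R_NormedModule). unfold f. auto_derive.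
    apply g_C1; auto. }
  assert (fint : forall a b, 0 < a -> 0 < b -> ex_RInt f a b).
  { intros a b Ha Hb. apply (@ex_RInt_continuous R_CompleteNormedModule). intros z Hz. apply fcont.
    assert (0 < Rmin a b) by (apply Rmin_pos; auto). lra. }
  assert (fpos : forall t, 0 <= f t) by (intros; unfold f; apply Rlt_le, exp_pos).
  set (H := fun b => RInt f 1 b).
  assert (Hder : forall x, 0 < x -> is_derive H x (f x)).
  { intros x Hx. apply is_derive_RInt with 1.
    - apply filter_imp with (2 := loc_pos x Hx). intros y Hy.
      apply RInt_correct. apply fint; lra.
    - apply fcont; lra. }
  assert (Hmono : forall a b, 1 <= a -> a <= b -> H a <= H b).
  { intros a b Ha Hab. unfold H. rewrite <- (RInt_Chasles f 1 a b).
    - assert (0 <= RInt f a b). { apply RInt_ge_0; auto. apply fint; lra. }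
      unfold plus; simpl. lra.
    - apply fint; lra.
    - apply fint; lra. }
  set (g0 := g 0).
  assert (Hg0 : 0 < g0) by (apply g_pos; lra).
  assert (Gbound : forall t, 0 <= t -> g0 * t <= Gprim g t).
  { intros t Ht. unfold Gprim.
    assert (RInt (fun _ => g0) 0 t <= RInt g 0 t).
    { apply RInt_le; auto.
      - apply ex_RInt_const.
      - apply (@ex_RInt_continuous R_CompleteNormedModule). intros z Hz. apply (@ex_derive_continuous R_AbsRing R_NormedModule).
        apply g_C1. rewrite Rmin_left in Hz; lra.
      - intros x Hx. apply g_mono; lra. }
    rewrite RInt_const in H0. unfold scal in H0; simpl in H0; unfold mult in H0; simpl in H0. lra. }
  apply is_lim_spec in hlim. simpl in hlim.
  destruct (hlim (mkposreal (c/2) ltac:(lra))) as [M HM]. simpl in HM.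
  set (T := Rmax 1 (M + 1)).
  set (K := T * T + / (g0 * g0)).
  assert (fbound : forall t, 1 <= t -> f t <= K / (t * t)).
  { intros t Ht.
    assert (HT1 : 1 <= T) by apply Rmax_l.
    assert (HT2 : M + 1 <= T) by apply Rmax_r.
    assert (Ht0 : 0 < t * t) by nra.
    assert (Hi : 0 < / (g0 * g0)) by (apply Rinv_0_lt_compat; nra).
    destruct (Rle_or_lt t T) as [HtT|HtT].
    - assert (f t <= 1).
      { unfold f. rewrite <- exp_0. apply exp_le_exp'.
        assert (0 < g t) by (apply g_pos; lra). nra. }
      assert (1 <= K / (t * t)).
      { unfold K. apply Rmult_le_reg_r with (t * t); auto.
        unfold Rdiv. rewrite Rmult_assoc, Rinv_l by lra. nra. }
      lra.
    - assert (Hgt : 0 < g t) by (apply g_pos; lra).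
      specialize (HM t ltac:(lra)).
      rewrite Rminus_0_r in HM. apply Rabs_lt_between in HM.
      destruct HM as [_ HM].
      assert (HG := Gbound t ltac:(lra)).
      set (Gt := Gprim g t) in *.
      assert (HGp : 0 < Gt) by nra.
      assert (Hln : ln Gt < c / 2 * g t).
      { apply Rmult_lt_compat_r with (r := g t) in HM; auto.
        unfold Rdiv in HM. rewrite Rmult_assoc, Rinv_l in HM by lra. lra. }
      assert (f t <= / (Gt * Gt)).
      { unfold f. replace (/ (Gt * Gt)) with (exp (- (2 * ln Gt))).
        - apply exp_le_exp'. lra.
        - rewrite exp_Ropp. f_equal. replace (2 * ln Gt) with (ln Gt + ln Gt) by ring.
          rewrite exp_plus, exp_ln; auto. }
      assert (/ (Gt * Gt) <= / ((g0 * t) * (g0 * t))).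
      { assert (0 < g0 * t) by (apply Rmult_lt_0_compat; lra).
        apply Rinv_le_contravar. nra. apply Rmult_le_compat; nra. }
      assert (/ ((g0 * t) * (g0 * t)) <= K / (t * t)).
      { replace (/ ((g0 * t) * (g0 * t))) with (/ (g0 * g0) / (t * t)).
        - unfold K, Rdiv. apply Rmult_le_compat_r.
          + apply Rlt_le, Rinv_0_lt_compat; auto.
          + nra.
        - field. split; lra. }
      lra. }

  assert (Hbnd : forall b, 1 <= b -> H b <= K).
  { intros b Hb.
    assert (HI : is_RInt (fun t => K / (t * t)) 1 b (minus (- K / b) (- K / 1))).
    { apply (@is_RInt_derive R_CompleteNormedModule (fun t => - K / t)).
      - intros x Hx. assert (1 <= x) by (rewrite Rmin_left in Hx; lra).
        auto_derive. lra. field. lra.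
      - intros x Hx. assert (1 <= x) by (rewrite Rmin_left in Hx; lra).
        apply (@ex_derive_continuous R_AbsRing R_NormedModule). auto_derive. nra. }
    assert (H b <= RInt (fun t => K / (t * t)) 1 b).
    { apply RInt_le; auto. apply fint; lra. eexists; exact HI.
      intros x Hx. apply fbound; lra. }
    rewrite (is_RInt_unique _ _ _ _ HI) in H0.
    unfold minus, plus, opp in H0; simpl in H0.
    assert (0 <= K / b).
    { unfold K. apply Rmult_le_pos. assert (0 < / (g0 * g0)) by (apply Rinv_0_lt_compat; nra). nra.
      apply Rlt_le, Rinv_0_lt_compat; lra. }
    unfold Rdiv in *. rewrite Rinv_1 in H0. lra. }

  set (E := fun y => exists b, 1 <= b /\ y = H b).
  destruct (completeness E) as [l [Hub Hlub]].
  { exists K. intros y [b [Hb ->]]. auto. }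
  { exists (H 1). exists 1. split; lra. }
  assert (Hlim : is_lim H p_infty l).
  { apply is_lim_spec. intros eps. simpl.
    destruct (Classical_Prop.classic (exists b0, 1 <= b0 /\ l - eps < H b0)) as [[b0 [Hb0 Hb0']]|Hn].
    - exists b0. intros y Hy.
      assert (H b0 <= H y) by (apply Hmono; lra).
      assert (H y <= l) by (apply Hub; exists y; split; auto; lra).
      apply Rabs_lt_between. destruct eps; simpl in *. lra.
    - exfalso. assert (l <= l - eps).
      { apply Hlub. intros y [b [Hb ->]].
        destruct (Rle_or_lt (H b) (l - eps)) as [?|Hlt]; auto.
        exfalso. apply Hn. exists b. auto. }
      destruct eps; simpl in *. lra. }
  assert (HG : is_RInt_gen (Derive H) (at_point 1) (Rbar_locally p_infty) (l - H 1)).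
  { apply is_RInt_gen_Derive.
    - apply Filter_prod with (fun a => a = 1) (fun b => 1 < b).
      + reflexivity.
      + exists 1. auto.
      + intros a b -> Hb x Hx. simpl in Hx. rewrite Rmin_left in Hx by lra.
        eexists. apply Hder. lra.
    - apply Filter_prod with (fun a => a = 1) (fun b => 1 < b).
      + reflexivity.
      + exists 1. auto.
      + intros a b -> Hb x Hx. simpl in Hx. rewrite Rmin_left in Hx by lra.
        apply continuous_ext_loc with f.
        * apply filter_imp with (2 := loc_pos x ltac:(lra)). intros y Hy.
          symmetry. apply is_derive_unique. apply Hder; auto.
        * apply fcont. lra.
    - intros P HP. unfold filtermap, at_point. apply locally_singleton. exact HP.
    - exact Hlim. }
  apply ex_RInt_gen_Chasles with 1.
  - apply (@ex_RInt_gen_at_point R_CompleteNormedModule). apply (@ex_RInt_continuous R_CompleteNormedModule).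
    intros z Hz. apply fcont. rewrite Rmin_left in Hz; lra.
  - exists (l - H 1). apply is_RInt_gen_ext with (Derive H); auto.
    apply Filter_prod with (fun a => a = 1) (fun b => 1 < b).
    + reflexivity.
    + exists 1. auto.
    + intros a b -> Hb x Hx. simpl in Hx. rewrite Rmin_left in Hx by lra.
      apply is_derive_unique. apply Hder. lra.
Qed.
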